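(* Let $(X,Y,Z,W)$ be a solution of system (S) on $(-\infty,t_{max})$. Assume $Y,W>0$, $\lim_{t\to-\infty}(X,Y,Z,W)(t)=(0,0,1,0)$, and $\mathcal C>0$. Then $dX(t)+Z(t)\le1$ for all $t\in(-\infty,t_{max})$.
   Context: Fix a positive integer $d$ and $q\in\mathbb R$. Put $A_2=d(d+2)$ and $A_3=\tfrac14d(d+2)^2q^2$. System (S) is $$X'=X(dX^2+Z^2-1)+\tfrac{A_2}{d}Y^2-2\tfrac{A_3}{d}W^2,\qquad Y'=Y(dX^2+Z^2-X),$$ $$Z'=Z(dX^2+Z^2-1)+A_3W^2,\qquad W'=W(dX^2+Z^2-2X+Z).$$ $g$ is a positive solution of $g'=gX$ and $\mathcal L=gY$. The first integral is $dX^2+A_2Y^2+Z^2-A_3W^2=1-\mathcal C\mathcal L^2$ with $\mathcal C$ constant; its sign does not depend on the normalization of $g$. *)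

(* Defs.v *)
From Stdlib Require Import Reals Lra.
Open Scope R_scope.

(* Time domain (-oo, tmax), where tmax = None encodes tmax = +oo. *)
Definition in_dom (tmax : option R) (t : R) : Prop :=
  match tmax with None => True | Some T => t < T end.

Definition A2 (d : nat) : R := INR d * (INR d + 2).
Definition A3 (d : nat) (q : R) : R := / 4 * INR d * (INR d + 2) ^ 2 * q ^ 2.

Definition solves_S (d : nat) (q : R) (tmax : option R)
    (X Y Z W : R -> R) : Prop :=
  forall t, in_dom tmax t ->
    derivable_pt_lim X t
      (X t * (INR d * X t ^ 2 + Z t ^ 2 - 1)
       + A2 d / INR d * Y t ^ 2 - 2 * (A3 d q / INR d) * W t ^ 2) /\
    derivable_pt_lim Y t (Y t * (INR d * X t ^ 2 + Z t ^ 2 - X t)) /\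
    derivable_pt_lim Z t
      (Z t * (INR d * X t ^ 2 + Z t ^ 2 - 1) + A3 d q * W t ^ 2) /\
    derivable_pt_lim W t
      (W t * (INR d * X t ^ 2 + Z t ^ 2 - 2 * X t + Z t)).

Definition lim_minus_infty (tmax : option R) (f : R -> R) (l : R) : Prop :=
  forall eps, 0 < eps -> exists M, forall t, in_dom tmax t -> t < M ->
    Rabs (f t - l) < eps.

(* Main.v *)
Require Import Defs.
From Stdlib Require Import Reals Lra Psatz.
Open Scope R_scope.

Lemma dquot (f1 f2 : R -> R) x l1 l2 :
  derivable_pt_lim f1 x l1 -> derivable_pt_lim f2 x l2 -> f2 x <> 0 ->
  derivable_pt_lim (fun t => f1 t / f2 t) x ((l1 * f2 x - l2 * f1 x) / (f2 x * f2 x)).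
Proof.
  intros H1 H2 H3. exact (derivable_pt_lim_div f1 f2 x l1 l2 H1 H2 H3).
Qed.

Lemma dmul (f1 f2 : R -> R) x l1 l2 :
  derivable_pt_lim f1 x l1 -> derivable_pt_lim f2 x l2 ->
  derivable_pt_lim (fun t => f1 t * f2 t) x (l1 * f2 x + f1 x * l2).
Proof.
  intros H1 H2. exact (derivable_pt_lim_mult f1 f2 x l1 l2 H1 H2).
Qed.

Lemma dF (d : nat) (X Z : R -> R) x lx lz :
  derivable_pt_lim X x lx -> derivable_pt_lim Z x lz ->
  derivable_pt_lim (fun t => INR d * X t + Z t - 1) x (INR d * lx + lz).
Proof.
  intros H1 H2.
  replace (INR d * lx + lz) with (INR d * lx + lz - 0) by ring.
  apply (derivable_pt_lim_minus (fun t => INR d * X t + Z t) (fun _ => 1)).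
  - apply (derivable_pt_lim_plus (fun t => INR d * X t) Z); auto.
    apply (derivable_pt_lim_scal X); auto.
  - apply derivable_pt_lim_const.
Qed.

Lemma mvt_noninc (f f' : R -> R) a b : a <= b ->
  (forall c, a <= c <= b -> derivable_pt_lim f c (f' c)) ->
  (forall c, a <= c <= b -> f' c <= 0) -> f b <= f a.
Proof.
  intros Hab Hd Hs. destruct (Rle_lt_or_eq_dec _ _ Hab) as [Hlt|Heq].
  - destruct (MVT_cor2 f f' a b Hlt Hd) as [c [Hc Hc2]].
    assert (f' c <= 0) by (apply Hs; lra). nra.
  - subst; lra.
Qed.

Lemma mvt_nondec (f f' : R -> R) a b : a <= b ->
  (forall c, a <= c <= b -> derivable_pt_lim f c (f' c)) ->
  (forall c, a <= c <= b -> 0 <= f' c) -> f a <= f b.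
Proof.
  intros Hab Hd Hs. destruct (Rle_lt_or_eq_dec _ _ Hab) as [Hlt|Heq].
  - destruct (MVT_cor2 f f' a b Hlt Hd) as [c [Hc Hc2]].
    assert (0 <= f' c) by (apply Hs; lra). nra.
  - subst; lra.
Qed.

Theorem proposition5p2 (d : nat) (q : R) (tmax : option R)
    (X Y Z W g : R -> R) (C : R) :
  (0 < d)%nat ->
  solves_S d q tmax X Y Z W ->
  (forall t, in_dom tmax t -> 0 < Y t /\ 0 < W t) ->
  lim_minus_infty tmax X 0 -> lim_minus_infty tmax Y 0 ->
  lim_minus_infty tmax Z 1 -> lim_minus_infty tmax W 0 ->
  (forall t, in_dom tmax t -> 0 < g t /\ derivable_pt_lim g t (g t * X t)) ->
  (forall t, in_dom tmax t ->
     INR d * X t ^ 2 + A2 d * Y t ^ 2 + Z t ^ 2 - A3 d q * W t ^ 2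
     = 1 - C * (g t * Y t) ^ 2) ->
  0 < C ->
  forall t, in_dom tmax t -> INR d * X t + Z t <= 1.
Proof.
  intros Hd HS HYW HX _ HZ _ Hg HI HC t1 Ht1.
  assert (Hdpos : 0 < INR d) by (apply lt_0_INR; lia).
  assert (HA3 : 0 <= A3 d q).
  { unfold A3. assert (0 <= q ^ 2) by nra. assert (0 <= (INR d + 2) ^ 2) by nra.
    assert (0 <= / 4 * INR d) by lra.
    apply Rmult_le_pos; [apply Rmult_le_pos|]; lra || nra. }
  set (H := fun t => exp t * (INR d * X t + Z t - 1) / (g t * Y t)).
  set (P := fun t => exp t * Z t / (g t * Y t)).
  assert (dom : forall t, t <= t1 -> in_dom tmax t).
  { intros t Ht. unfold in_dom in *. destruct tmax; auto; lra. }
  assert (HL : forall t, in_dom tmax t -> 0 < g t * Y t).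
  { intros t Ht. destruct (Hg t Ht). destruct (HYW t Ht). nra. }
  assert (Hmono : forall t, t <= t1 -> H t1 <= H t).
  { intros t Ht.
    set (L := fun s => g s * Y s).
    set (Hd' := fun s => exp s * (- C * L s ^ 2) / L s).
    apply (mvt_noninc H Hd' t t1 Ht).
    - intros c Hc. assert (Dc : in_dom tmax c) by (apply dom; lra).
      destruct (HS c Dc) as [DX [DY [DZ DW]]].
      destruct (Hg c Dc) as [gp Dg].
      pose proof (HL c Dc) as Lp.
      pose proof (HI c Dc) as Ic.
      pose proof (dquot _ _ c _ _ (dmul _ _ c _ _ (derivable_pt_lim_exp c) (dF d X Z c _ _ DX DZ))
                      (dmul _ _ c _ _ Dg DY) ltac:(lra)) as D.
      match type of D with derivable_pt_lim _ _ ?v => replace (Hd' c) with v; [exact D|] end.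
      unfold Hd'.
      replace (- C * L c ^ 2) with
        (INR d * X c ^ 2 + A2 d * Y c ^ 2 + Z c ^ 2 - A3 d q * W c ^ 2 - 1)
        by (unfold L; lra).
      unfold L. destruct (HYW c Dc). field. repeat split; lra.
    - intros c Hc. assert (Dc : in_dom tmax c) by (apply dom; lra).
      pose proof (HL c Dc). unfold Hd'. pose proof (exp_pos c).
      unfold Rdiv. assert (0 < / L c) by (apply Rinv_0_lt_compat; auto).
      assert (0 <= C * L c ^ 2) by (apply Rmult_le_pos; [lra| apply pow2_ge_0]).
      assert (exp c * (- C * L c ^ 2) <= 0) by nra.
      set (u := / L c) in *. set (v := exp c * (- C * L c ^ 2)) in *. nra. }
  assert (Pmono : forall t, t <= t1 -> P t <= P t1).
  { intros t Ht.
    set (Pd := fun s => exp s * (A3 d q * W s ^ 2) / (g s * Y s)).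
    apply (mvt_nondec P Pd t t1 Ht).
    - intros c Hc. assert (Dc : in_dom tmax c) by (apply dom; lra).
      destruct (HS c Dc) as [DX [DY [DZ DW]]].
      destruct (Hg c Dc) as [gp Dg].
      pose proof (HL c Dc) as Lp.
      pose proof (dquot _ _ c _ _ (dmul _ _ c _ _ (derivable_pt_lim_exp c) DZ)
                      (dmul _ _ c _ _ Dg DY) ltac:(lra)) as D.
      match type of D with derivable_pt_lim _ _ ?v => replace (Pd c) with v; [exact D|] end.
      unfold Pd. destruct (HYW c Dc). field. repeat split; lra.
    - intros c Hc. assert (Dc : in_dom tmax c) by (apply dom; lra).
      pose proof (HL c Dc). unfold Pd. pose proof (exp_pos c).
      unfold Rdiv. assert (0 < / (g c * Y c)) by (apply Rinv_0_lt_compat; auto).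
      assert (0 <= A3 d q * W c ^ 2) by (apply Rmult_le_pos; [lra| apply pow2_ge_0]).
      set (u := / (g c * Y c)) in *. set (v := A3 d q * W c ^ 2) in *. apply Rmult_le_pos; [apply Rmult_le_pos|]; lra. }
  destruct (Rle_or_lt (H t1) 0) as [Hn|Hp].
  - pose proof (HL t1 Ht1). pose proof (exp_pos t1).
    unfold H in Hn. unfold Rdiv in Hn.
    assert (0 < / (g t1 * Y t1)) by (apply Rinv_0_lt_compat; auto).
    set (u := / (g t1 * Y t1)) in *.
    set (F := INR d * X t1 + Z t1 - 1) in *.
    assert (0 < exp t1 * u) by nra.
    assert (F * (exp t1 * u) <= 0) by nra.
    assert (F <= 0) by nra. unfold F in *; lra.
  - exfalso.
    set (K := Rabs (P t1) + 1).
    assert (Kp : 0 < K) by (unfold K; pose proof (Rabs_pos (P t1)); lra).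
    set (eps := H t1 / (4 * K)).
    assert (epsp : 0 < eps) by (unfold eps; apply Rdiv_lt_0_compat; lra).
    set (del := Rmin (1/2) (eps / (INR d + 1))).
    assert (delp : 0 < del).
    { unfold del. apply Rmin_glb_lt; [lra|]. apply Rdiv_lt_0_compat; lra. }
    destruct (HX del delp) as [M1 HM1].
    destruct (HZ del delp) as [M2 HM2].
    set (t := Rmin (Rmin M1 M2) t1 - 1).
    assert (tle : t < M1 /\ t < M2 /\ t < t1).
    { unfold t. pose proof (Rmin_l (Rmin M1 M2) t1). pose proof (Rmin_r (Rmin M1 M2) t1).
      pose proof (Rmin_l M1 M2). pose proof (Rmin_r M1 M2). lra. }
    destruct tle as [t1' [t2' t3']].
    assert (Dt : in_dom tmax t) by (apply dom; lra).
    pose proof (HM1 t Dt t1') as Xs. pose proof (HM2 t Dt t2') as Zs.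
    rewrite Rminus_0_r in Xs.
    assert (del1 : del <= 1/2) by apply Rmin_l.
    assert (del2 : del <= eps / (INR d + 1)) by apply Rmin_r.
    assert (del3 : del * (INR d + 1) <= eps).
    { apply (Rmult_le_compat_r (INR d + 1)) in del2; [|lra].
      unfold Rdiv in del2. rewrite Rmult_assoc, Rinv_l in del2; lra. }
    apply Rabs_def2 in Xs. apply Rabs_def2 in Zs.
    assert (Fb : Rabs (INR d * X t + Z t - 1) <= eps).
    { apply Rabs_le. split; nra. }
    pose proof (Hmono t (Rlt_le _ _ t3')) as Hm.
    pose proof (Pmono t (Rlt_le _ _ t3')) as Pm.
    pose proof (HL t Dt). pose proof (exp_pos t).
    assert (0 < / (g t * Y t)) by (apply Rinv_0_lt_compat; auto).
    unfold H, P, Rdiv in Hm, Pm.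
    set (a := exp t * / (g t * Y t)) in *.
    assert (ap : 0 < a) by (unfold a; nra).
    assert (HtE : exp t * (INR d * X t + Z t - 1) * / (g t * Y t)
                  = (INR d * X t + Z t - 1) * a) by (unfold a; ring).
    assert (PtE : exp t * Z t * / (g t * Y t) = Z t * a) by (unfold a; ring).
    rewrite HtE in Hm. rewrite PtE in Pm.
    change (exp t1 * Z t1 * / (g t1 * Y t1)) with (P t1) in Pm.
    change (exp t1 * (INR d * X t1 + Z t1 - 1) * / (g t1 * Y t1)) with (H t1) in Hm.
    assert (PK : P t1 <= K) by (unfold K; pose proof (Rle_abs (P t1)); lra).
    assert (aK : a < 2 * K).
    { assert (Z t > 1/2) by lra. assert (a * (Z t - 1/2) > 0) by (apply Rmult_lt_0_compat; lra).
      lra. }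
    set (F := INR d * X t + Z t - 1) in *.
    assert (F <= eps) by (pose proof (Rle_abs F); lra).
    assert (F * a <= eps * a) by nra.
    assert (eps * (4 * K) = H t1) by (unfold eps; field; lra).
    nra.
Qed.
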